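(* Let $N\ge 4$ be a multiple of $4$ and $0\le r_1<\dots<r_N\le 1$. Let $h_1^*$ be the 2-factor of $\mathcal K_N$ consisting of the $N/4$ four-cycles $(r_a,r_{a+N/2},r_{a+1},r_{a+N/2+1})$ for $a=1,3,5,\dots,\frac N2-1$, and let $h_2^*$ be the 2-factor consisting of the $N/4$ four-cycles $(r_a,r_{a+N/2},r_{a-1},r_{a+N/2-1})$ for $a=1,3,\dots,\frac N2-1$, where indices are taken mod $N$ in $\{1,\dots,N\}$ (so for $a=1$ the cycle is $(r_1,r_{N/2+1},r_N,r_{N/2})$). Then $h_1^*$ and $h_2^*$ are exactly the 2-factors of $\mathcal K_N$ having the maximum number of crossing pairs of edges.
   Context: A 2-factor of $\mathcal K_N$ is a spanning subgraph in which each vertex has degree $2$, i.e. a covering of all vertices by vertex-disjoint cycles of length at least $3$; a cycle written $(v_1,\dots,v_m)$ has edges $\{v_i,v_{i+1}\}$ and $\{v_m,v_1\}$. Two edges $\{r_i,r_j\}$, $\{r_k,r_\ell\}$ with $i<j$, $k<\ell$ cross if $i<k<j<\ell$ or $k<i<\ell<j$; the number of crossings of a 2-factor is the number of unordered pairs of its edges that cross. *)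

(* Defs.v *)
(* Vertices r_1 < ... < r_N of K_N are identified with their
   indices, 0-indexed: vertex i : 'I_N stands for r_(i+1). *)
From HB Require Import structures.
From mathcomp Require Import all_boot all_order all_algebra.
Set Implicit Arguments. Unset Strict Implicit. Unset Printing Implicit Defensive.

(* An edge of K_N is a 2-element vertex set; a 2-factor is a set of edges of K_N
   in which every vertex lies on exactly 2 edges (a spanning 2-regular simple
   subgraph, i.e. a disjoint union of cycles of length >= 3 covering all vertices). *)
Definition is_edge (N : nat) (e : {set 'I_N}) : bool := #|e| == 2.

Definition two_factor (N : nat) (F : {set {set 'I_N}}) : Prop :=
  (forall e, e \in F -> is_edge e) /\
  (forall v : 'I_N, #|[set e in F | v \in e]| = 2).

Definition cross (N : nat) (e f : {set 'I_N}) : bool :=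
  [exists i : 'I_N, exists j : 'I_N, exists k : 'I_N, exists l : 'I_N,
    [&& e == [set i; j], f == [set k; l], i < j, k < l &
        ((i < k) && (k < j) && (j < l)) || ((k < i) && (i < l) && (l < j))]].

Definition crossings (N : nat) (F : {set {set 'I_N}}) : nat :=
  #|[set P : {set {set 'I_N}} |
      [&& P \subset F, #|P| == 2 & [exists e in P, exists f in P, cross e f]]]|.

Definition nedge (N : nat) (x y : nat) : {set 'I_N} :=
  [set i : 'I_N | (val i == x) || (val i == y)].

Definition cyc4 (N : nat) (x y z w : nat) : {set {set 'I_N}} :=
  [set nedge N x y; nedge N y z; nedge N z w; nedge N w x].

(* h1*: cycles (r_a, r_(a+N/2), r_(a+1), r_(a+N/2+1)), a = 1,3,...,N/2-1;
   0-based with a = 2b+1, b < N/4. *)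
Definition h1 (N : nat) : {set {set 'I_N}} :=
  \bigcup_(b < N %/ 4)
     cyc4 N (2 * b) (2 * b + N %/ 2) (2 * b + 1) (2 * b + N %/ 2 + 1).

(* h2*: cycles (r_a, r_(a+N/2), r_(a-1), r_(a+N/2-1)), indices mod N;
   0-based: (2b, 2b+N/2, (2b-1) mod N, 2b+N/2-1). *)
Definition h2 (N : nat) : {set {set 'I_N}} :=
  \bigcup_(b < N %/ 4)
     cyc4 N (2 * b) (2 * b + N %/ 2) ((2 * b + N - 1) %% N) (2 * b + N %/ 2 - 1).

(* Main.v *)
Require Import Defs.
From HB Require Import structures.
From mathcomp Require Import all_boot all_order all_algebra.
From mathcomp Require Import zify.
Set Implicit Arguments. Unset Strict Implicit. Unset Printing Implicit Defensive.

Lemma cardS (T : finType) (A : {set T}) (P : pred T) :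
  #|[set x in A | P x]| = \sum_(x in A) (P x : nat).
Proof.
rewrite -sum1_card (eq_bigl (fun x => (x \in A) && P x)) => [|x]; last by rewrite inE.
rewrite big_mkcondr /=; apply: eq_bigr => x _; by case: (P x).
Qed.

Lemma DC (X Y : finType) (A : {set X}) (B : {set Y}) (R : X -> Y -> bool) :
  \sum_(x in A) #|[set y in B | R x y]| = \sum_(y in B) #|[set x in A | R x y]|.
Proof.
under eq_bigr do rewrite cardS.
rewrite exchange_big /=; apply: eq_bigr => y _; by rewrite cardS.
Qed.

Lemma edgeP N (e : {set 'I_N}) : is_edge e -> exists i j : 'I_N, i < j /\ e = [set i; j].
Proof.
rewrite /is_edge => /cards2P [x [y [nxy ->]]].
case: (ltngtP x y) => h; first by exists x, y.
  by exists y, x; rewrite setUC.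
by move/val_inj: h => h; rewrite h eqxx in nxy.
Qed.

Lemma in2 N (i j v : 'I_N) : (v \in [set i; j]) = ((v : nat) == i) || ((v : nat) == j).
Proof. by rewrite !inE. Qed.

Lemma set2_eq N (i j k l : 'I_N) : i < j -> k < l -> [set i; j] = [set k; l] -> i = k /\ j = l.
Proof.
move=> hij hkl E.
have : i \in [set k; l] by rewrite -E !inE eqxx.
have : j \in [set k; l] by rewrite -E !inE eqxx orbT.
have : k \in [set i; j] by rewrite E !inE eqxx.
rewrite !in2 => /orP[] /eqP h1 /orP[] /eqP h2 /orP[] /eqP h3; split; apply: val_inj => /=; lia.
Qed.

Lemma crossE N (i j k l : 'I_N) : i < j -> k < l ->
  cross [set i; j] [set k; l] = ((i < k) && (k < j) && (j < l)) || ((k < i) && (i < l) && (l < j)).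
Proof.
move=> hij hkl; apply/idP/idP.
  case/existsP => i' /existsP[j' /existsP[k' /existsP[l' /and5P[/eqP E1 /eqP E2 h1 h2 h3]]]].
  by case: (set2_eq hij h1 E1) => -> ->; case: (set2_eq hkl h2 E2) => -> ->.
move=> h; apply/existsP; exists i; apply/existsP; exists j; apply/existsP; exists k;
  apply/existsP; exists l; by rewrite !eqxx hij hkl h.
Qed.

Lemma crossC N (e f : {set 'I_N}) : cross e f = cross f e.
Proof.
apply/idP/idP;
case/existsP => i' /existsP[j' /existsP[k' /existsP[l' /and5P[E1 E2 h1 h2 h3]]]];
apply/existsP; exists k'; apply/existsP; exists l'; apply/existsP; exists i';
  apply/existsP; exists j'; rewrite E1 E2 h1 h2 /=; case/orP: h3 => ->; by rewrite ?orbT.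
Qed.

Lemma cross_edges N (e f : {set 'I_N}) : cross e f ->
  exists i j k l : 'I_N, [/\ i < j, k < l, e = [set i; j], f = [set k; l] &
     ((i < k) && (k < j) && (j < l)) || ((k < i) && (i < l) && (l < j))].
Proof.
case/existsP => i /existsP[j /existsP[k /existsP[l /and5P[/eqP E1 /eqP E2 h1 h2 h3]]]].
by exists i, j, k, l.
Qed.

Lemma cross_irr N (e : {set 'I_N}) : ~~ cross e e.
Proof.
apply/negP => /cross_edges [i [j [k [l [h1 h2 E1 E2 h]]]]].
rewrite E1 in E2; case: (set2_eq h1 h2 E2) => <- <- in h; lia.
Qed.

Ltac normv := repeat match goal with
  | H : context [isSub.val_subdef _ ?v] |- _ => change (isSub.val_subdef _ v) with (nat_of_ord v) in H
  | |- context [isSub.val_subdef _ ?v] => change (isSub.val_subdef _ v) with (nat_of_ord v) end.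
Ltac nlia := normv; lia.

Lemma card_split (T : finType) (A : {set T}) (P : pred T) :
  #|A| = #|[set x in A | P x]| + #|[set x in A | ~~ P x]|.
Proof. rewrite (cardS A P) (cardS A (fun x => ~~ P x)) -big_split /= -sum1_card; apply: eq_bigr => x _; by case: (P x). Qed.

Lemma tf_card N (F : {set {set 'I_N}}) : two_factor F -> #|F| = N.
Proof.
case=> He Hd.
have := DC [set: 'I_N] F (fun v e => v \in e).
rewrite (eq_bigr (fun _ => 2)) => [|v _]; last exact: Hd.
rewrite sum_nat_const cardsT card_ord.
rewrite [X in _ = X](eq_bigr (fun _ => 2)) => [|e eF]; last first.
  rewrite (_ : [set x in [set: 'I_N] | x \in e] = e); first exact/eqP/He.
  by apply/setP => x; rewrite !inE.
rewrite sum_nat_const; lia.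
Qed.

Lemma nedgeE N (i j : 'I_N) : nedge N i j = [set i; j].
Proof. by apply/setP => k; rewrite !inE. Qed.

Lemma in_nedge N x y (k : 'I_N) : (k \in nedge N x y) = ((k : nat) == x) || ((k : nat) == y).
Proof. by rewrite inE. Qed.

Lemma nedgeC N x y : nedge N x y = nedge N y x.
Proof. by apply/setP => k; rewrite !inE orbC. Qed.

Lemma nedge_ord N x y (hx : x < N) (hy : y < N) :
  nedge N x y = [set Ordinal hx; Ordinal hy].
Proof. exact: (nedgeE (Ordinal hx) (Ordinal hy)). Qed.

Lemma nedge_edge N x y : x < N -> y < N -> x != y -> is_edge (nedge N x y).
Proof.
move=> hx hy nxy; rewrite (nedge_ord hx hy) /is_edge cards2.
have -> : Ordinal hx != Ordinal hy by apply/eqP => h; move/eqP: nxy; apply; exact: (congr1 val h).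
by [].
Qed.

Lemma edgeN N (e : {set 'I_N}) : is_edge e -> exists x y, [/\ x < y, y < N & e = nedge N x y].
Proof.
case/edgeP => i [j [hij ->]]; exists i, j; split => //; by rewrite nedgeE.
Qed.

Lemma nedge_inj N x y x' y' : x < y -> y < N -> x' < y' -> y' < N ->
  nedge N x y = nedge N x' y' -> x = x' /\ y = y'.
Proof.
move=> h1 h2 h3 h4; rewrite (nedge_ord (ltn_trans h1 h2) h2) (nedge_ord (ltn_trans h3 h4) h4).
by case/set2_eq => // -[] -> [] ->.
Qed.

Lemma crossN N x y k l : x < y -> y < N -> k < l -> l < N ->
  cross (nedge N x y) (nedge N k l) = ((x < k) && (k < y) && (y < l)) || ((k < x) && (x < l) && (l < y)).
Proof.
move=> h1 h2 h3 h4; rewrite (nedge_ord (ltn_trans h1 h2) h2) (nedge_ord (ltn_trans h3 h4) h4).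
by rewrite crossE.
Qed.

Lemma cross_nedge N x y f : x < y -> y < N -> cross (nedge N x y) f ->
  exists k l, [/\ k < l, l < N, f = nedge N k l &
     ((x < k) && (k < y) && (y < l)) || ((k < x) && (x < l) && (l < y))].
Proof.
move=> h1 h2 /cross_edges [i [j [k [l [hij hkl E1 E2 h]]]]].
rewrite -nedgeE in E1; case: (nedge_inj h1 h2 hij (ltn_ord j) E1) => ex ey.
exists k, l; split; [done | exact: ltn_ord | by rewrite E2 nedgeE | by rewrite ex ey].
Qed.

Lemma edge_eq N (f : {set 'I_N}) (i j : 'I_N) : is_edge f -> i \in f -> j \in f -> i != j -> f = [set i; j].
Proof.
move=> hf hi hj nij; apply/eqP; rewrite eq_sym eqEcard.
rewrite cards2 nij (eqP hf) leqnn andbT.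
apply/subsetP => v; rewrite !inE => /orP[] /eqP ->; done.
Qed.

Lemma partition_cnt N (F : {set {set 'I_N}}) (i j : 'I_N) : two_factor F -> i < j -> [set i; j] \in F ->
  N = 3 + #|[set f in F | cross [set i; j] f]|
        + #|[set f in F | [&& i \notin f, j \notin f & ~~ cross [set i; j] f]]|.
Proof.
move=> tf hij eF; have [He Hd] := tf.
have nij : i != j by rewrite neq_ltn hij.
rewrite -{1}(tf_card tf) (card_split F (fun f => (i \in f) || (j \in f))).
have -> : [set x in F | (i \in x) || (j \in x)] = [set f in F | i \in f] :|: [set f in F | j \in f].
  by apply/setP => f; rewrite !inE andb_orr.
rewrite cardsU Hd Hd.
have -> : [set f in F | i \in f] :&: [set f in F | j \in f] = [set [set i; j]].
  apply/setP => f; rewrite !inE; apply/idP/idP.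
    case/andP => /andP [fF fi] /andP [_ fj]; apply/eqP; exact: edge_eq (He _ fF) fi fj nij.
  by move/eqP ->; rewrite eF !inE !eqxx orbT.
rewrite cards1.
have cdis : forall f, cross [set i; j] f -> (i \notin f) && (j \notin f).
  move=> f /cross_edges [i' [j' [k [l [h1 h2 E1 E2 h]]]]].
  case: (set2_eq hij h1 E1) => ei ej; subst i' j'; rewrite E2 !in2; apply/andP; split; apply/negP; 
  move/orP => [] /eqP hh; lia.
rewrite (card_split [set x in F | ~~ ((i \in x) || (j \in x))] (cross [set i; j])).
have -> : [set x in [set x in F | ~~ ((i \in x) || (j \in x))] | cross [set i; j] x] = [set f in F | cross [set i; j] f].
  apply/setP => f; rewrite !inE; case hc: (cross _ f); last by rewrite !andbF.
  have := cdis _ hc; case/andP => /negbTE -> /negbTE ->; by rewrite ?andbT.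
have -> : [set x in [set x in F | ~~ ((i \in x) || (j \in x))] | ~~ cross [set i; j] x] = 
   [set f in F | [&& i \notin f, j \notin f & ~~ cross [set i; j] f]].
  apply/setP => f; rewrite !inE negb_or. by case: (f \in F); case: (i \in f); case: (j \in f).
lia.
Qed.

Lemma cross_le_side N (F : {set {set 'I_N}}) e (A : {set 'I_N}) : two_factor F ->
  (forall f, f \in F -> cross e f -> exists2 v, v \in A & v \in f) ->
  #|[set f in F | cross e f]| <= 2 * #|A|.
Proof.
move=> [He Hd] hA.
have := DC A F (fun v f => v \in f).
rewrite (eq_bigr (fun _ => 2)) => [|v _]; last exact: Hd.
rewrite sum_nat_const mulnC => ->.
rewrite cardS; apply: leq_sum => f fF.
case hc: (cross e f) => //=.
case: (hA f fF hc) => v vA vf; apply/card_gt0P; exists v; by rewrite !inE vA vf.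
Qed.

Lemma sum_int n a b : \sum_(0 <= v < n) ((a <= v) && (v < b) : nat) = minn n b - a.
Proof.
elim: n => [|n IH]; first by rewrite big_geq // min0n sub0n.
rewrite big_nat_recr //= IH; case: (leqP a n) => h1; case: (ltnP n b) => h2 /=; lia.
Qed.

Lemma card_int N (P : nat -> bool) : #|[set v : 'I_N | P v]| = \sum_(0 <= v < N) (P v : nat).
Proof.
rewrite (_ : [set v : 'I_N | P v] = [set v in [set: 'I_N] | P v]); last by apply/setP => v; rewrite !inE.
rewrite cardS big_mkord; apply: eq_bigl => v; by rewrite inE.
Qed.

Lemma card_in N x y : y < N -> #|[set v : 'I_N | (x < v) && (v < y)]| = y - x - 1.
Proof. move=> hy; rewrite (card_int N (fun v => (x < v) && (v < y))) sum_int; lia. Qed.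

Lemma card_out N x y : x < y -> y < N -> #|[set v : 'I_N | (v < x) || (y < v)]| = x + (N - y - 1).
Proof.
move=> hxy hy; rewrite (card_int N (fun v => (v < x) || (y < v))).
rewrite (eq_big_nat _ _ (F2 := fun v => ((0 <= v) && (v < x) : nat) + ((y.+1 <= v) && (v < N) : nat))).
  rewrite big_split !sum_int /=; lia.
move=> v /andP [_ hv]; case: (ltnP v x) => h1; case: (ltnP y v) => h2 /=; rewrite ?hv /=; lia.
Qed.

Definition cnt N (F : {set {set 'I_N}}) e := #|[set f in F | cross e f]|.

Lemma cross_bounds N (F : {set {set 'I_N}}) x y : two_factor F -> x < y -> y < N ->
  cnt F (nedge N x y) <= 2 * (y - x - 1) /\ cnt F (nedge N x y) <= 2 * (x + (N - y - 1)).
Proof.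
move=> tf hxy hy; split.
  rewrite -(card_in x hy); apply: cross_le_side => // f fF /(cross_nedge hxy hy) [k [l [hkl hl -> h]]].
  have hk : k < N by apply: ltn_trans hl.
  case/orP: h => /andP [/andP [h1 h2] h3].
    exists (Ordinal hk); [rewrite inE /=; apply/andP; split; lia | by rewrite in_nedge eqxx].
  exists (Ordinal hl); [rewrite inE /=; apply/andP; split; lia | by rewrite in_nedge eqxx orbT].
rewrite -(card_out hxy hy); apply: cross_le_side => // f fF /(cross_nedge hxy hy) [k [l [hkl hl -> h]]].
have hk : k < N by apply: ltn_trans hl.
case/orP: h => /andP [/andP [h1 h2] h3].
  exists (Ordinal hl); [rewrite inE /=; apply/orP; right; lia | by rewrite in_nedge eqxx orbT].
exists (Ordinal hk); [rewrite inE /=; apply/orP; left; lia | by rewrite in_nedge eqxx].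
Qed.

Lemma cross_sum N (F : {set {set 'I_N}}) : 2 * crossings F = \sum_(e in F) cnt F e.
Proof.
set OP := [set p : {set 'I_N} * {set 'I_N} | (p.1 \in F) && ((p.2 \in F) && cross p.1 p.2)].
have -> : \sum_(e in F) cnt F e = #|OP|.
  rewrite /cnt; under eq_bigr do rewrite -sum1dep_card.
  by rewrite pair_big_dep sum1dep_card.
set CP := [set P : {set {set 'I_N}} | [&& P \subset F, #|P| == 2 & [exists e in P, exists f in P, cross e f]]].
have := DC CP OP (fun P p => P == [set p.1; p.2]).
rewrite (eq_bigr (fun _ => 2)) => [|P]; last first.
  rewrite inE => /and3P [sPF cP /existsP [e /andP [eP /existsP [f /andP [fP cef]]]]].
  have nef : e != f by apply: contraTneq cef => ->; exact: cross_irr.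
  have PE : P = [set e; f] by apply/eqP; rewrite eq_sym eqEcard cards2 nef (eqP cP) leqnn andbT;
    apply/subsetP => g; rewrite !inE => /orP [] /eqP ->.
  have eF : e \in F := subsetP sPF e eP.
  have fF : f \in F := subsetP sPF f fP.
  rewrite (_ : [set y in OP | P == [set y.1; y.2]] = [set (e, f); (f, e)]).
    by rewrite cards2 xpair_eqE negb_and nef.
  apply/setP => -[a b]; rewrite !inE /= PE; apply/idP/idP.
    case/andP => /and3P [aF bF cab] /eqP E.
    have ab : a != b by apply: contraTneq cab => ->; exact: cross_irr.
    have : a \in [set e; f] by rewrite E !inE eqxx.
    have : b \in [set e; f] by rewrite E !inE eqxx orbT.
    move: ab; rewrite !inE !xpair_eqE.
    move=> ab /orP [] /eqP eb /orP [] /eqP ea; subst a b; rewrite ?eqxx ?orbT ?andbT //=; by rewrite eqxx in ab.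
  case/orP => /eqP [-> ->]; rewrite eF fF ?(crossC f e) cef /=; rewrite ?eqxx //; by rewrite setUC eqxx.
rewrite sum_nat_const => H; rewrite /crossings -/CP mulnC H.
rewrite (eq_bigr (fun _ => 1)) => [|p]; last first.
  rewrite inE => /and3P [aF bF cab].
  rewrite (_ : [set x in CP | x == [set p.1; p.2]] = [set [set p.1; p.2]]) ?cards1 //.
  apply/setP => P; rewrite !inE; case: (P =P [set p.1; p.2]) => [->|]; rewrite ?andbF ?andbT //.
  have ab : p.1 != p.2 by apply: contraTneq cab => ->; exact: cross_irr.
  rewrite cards2 ab /=; apply/andP; split.
    by apply/subsetP => g; rewrite !inE => /orP [] /eqP ->.
  apply/existsP; exists p.1; rewrite !inE eqxx /=; apply/existsP; exists p.2; by rewrite !inE eqxx orbT.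
by rewrite sum_nat_const muln1.
Qed.

Definition isdiam N (e : {set 'I_N}) :=
  [exists i : 'I_N, (i < N %/ 2) && (e == nedge N i (i + N %/ 2))].

Lemma isdiamN N m x y : N = 4 * m -> x < y -> y < N -> isdiam (nedge N x y) = (y == x + N %/ 2).
Proof.
move=> hN hxy hy; apply/idP/idP.
  case/existsP => i /andP [hi /eqP E].
  have h2 : i + N %/ 2 < N by lia.
  case: (nedge_inj hxy hy _ h2 E) => [|-> ->]; [lia | by rewrite eqxx].
move/eqP => ey; apply/existsP; exists (Ordinal (ltn_trans hxy hy)); rewrite /= -ey eqxx andbT; lia.
Qed.

Lemma in_nedge_ord N x y (k : 'I_N) : k \in nedge N x y -> (k : nat) = x \/ (k : nat) = y.
Proof. by rewrite in_nedge => /orP [] /eqP ->; [left|right]. Qed.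

Lemma card_nedge1 N x : x < N -> #|nedge N x x| = 1.
Proof. move=> hx; by rewrite (nedge_ord hx hx) setUid cards1. Qed.

Lemma diam_sum N m (F : {set {set 'I_N}}) : N = 4 * m ->
  #|[set e in F | isdiam e]| =
  \sum_(v in [set v : 'I_N | v < N %/ 2]) #|[set e in [set e in F | isdiam e] | v \in e]|.
Proof.
move=> hN; rewrite DC -sum1_card; apply: eq_bigr => e; rewrite !inE => /andP [eF].
case/existsP => i /andP [hi /eqP ->].
rewrite (_ : [set x in [set v : 'I_N | v < N %/ 2] | x \in nedge N i (i + N %/ 2)] = nedge N i i).
  by rewrite card_nedge1.
apply/setP => v; rewrite !inE; apply/idP/idP.
  case/andP => h /orP [] /eqP hv; normv; rewrite hv ?eqxx //; lia.
by rewrite orbb => /eqP hv; normv; rewrite hv eqxx andbT; lia.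
Qed.

Lemma diam_term N m (F : {set {set 'I_N}}) (v : 'I_N) : N = 4 * m -> v < N %/ 2 ->
  #|[set e in [set e in F | isdiam e] | v \in e]| <= 1 /\
  (0 < #|[set e in [set e in F | isdiam e] | v \in e]| -> nedge N v (v + N %/ 2) \in F).
Proof.
move=> hN hv.
have key : forall e, e \in [set e in [set e in F | isdiam e] | v \in e] -> e = nedge N v (v + N %/ 2) /\ e \in F.
  move=> e; rewrite !inE => /andP [/andP [eF /existsP [i /andP [hi /eqP E]]] ve].
  move: ve; rewrite E => /in_nedge_ord [] hvi; last lia.
  by rewrite -hvi; split => //; rewrite hvi -E.
split.
  rewrite -(cards1 (nedge N v (v + N %/ 2))); apply: subset_leq_card; apply/subsetP => e /key [-> _].
  by rewrite inE.
case/card_gt0P => e /key [<-]; done.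
Qed.

Lemma card_half N m : N = 4 * m -> #|[set v : 'I_N | v < N %/ 2]| = N %/ 2.
Proof.
move=> hN; rewrite (card_int N (fun v => v < N %/ 2)).
rewrite (eq_bigr (fun v => ((0 <= v) && (v < N %/ 2) : nat))) // sum_int; lia.
Qed.

Lemma diam_le N m (F : {set {set 'I_N}}) : N = 4 * m -> #|[set e in F | isdiam e]| <= N %/ 2.
Proof.
move=> hN; rewrite (diam_sum F hN) -{2}(card_half hN) -sum1_card; apply: leq_sum => v.
rewrite inE => hv; by case: (diam_term F hN hv).
Qed.

Lemma diam_full N m (F : {set {set 'I_N}}) : N = 4 * m -> #|[set e in F | isdiam e]| = N %/ 2 ->
  forall v, v < N %/ 2 -> nedge N v (v + N %/ 2) \in F.
Proof.
move=> hN hD v hv.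
have hvN : v < N by lia.
set w := Ordinal hvN.
have hw : w < N %/ 2 by [].
case: (diam_term F hN hw) => _; apply.
rewrite lt0n; apply/negP => /eqP t0.
have := diam_sum F hN; rewrite hD => E.
set A := [set v : 'I_N | v < N %/ 2] in E.
have wA : w \in A by rewrite inE.
have : \sum_(u in A) (#|[set e in [set e in F | isdiam e] | u \in e]| + (u == w : nat)) <= \sum_(u in A) 1.
  apply: leq_sum => u uA; case: (u =P w) => [->|_]; first by rewrite t0.
  rewrite addn0; by case: (diam_term F hN (_ : u < N %/ 2)) => //; rewrite inE in uA.
rewrite big_split /= -E sum1_card (card_half hN).
rewrite -(cardS A (fun u => u == w)).
rewrite (_ : [set x in A | x == w] = [set w]) ?cards1; first lia.
apply/setP => u; rewrite !inE; case: (u =P w) => [->|]; rewrite ?andbT ?andbF //; normv; rewrite /= ?andbT; done.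
Qed.

Lemma edge_cnt N (G : {set {set 'I_N}}) e : two_factor G -> e \in G ->
  exists x y, [/\ x < y, y < N & e = nedge N x y] /\ [/\ cnt G e + 3 <= N,
     cnt G e <= 2 * (y - x - 1) & cnt G e <= 2 * (x + (N - y - 1))].
Proof.
move=> tf eG; have [He _] := tf.
case: (edgeP (He _ eG)) => i [j [hij E]].
have := partition_cnt tf hij; rewrite -E => /(_ eG) hp.
have [b1 b2] := cross_bounds tf hij (ltn_ord j).
rewrite nedgeE -E /cnt in b1 b2.
exists i, j; rewrite nedgeE -E /cnt; split; split => //; lia.
Qed.

Lemma U1 N m (G : {set {set 'I_N}}) e : N = 4 * m -> two_factor G -> e \in G ->
  cnt G e + (~~ isdiam e : nat) <= N - 3 /\
  (~~ isdiam e -> cnt G e + 1 = N - 3 -> exists x y, [/\ x < y, y < N, e = nedge N x y &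
        (y = x + N %/ 2 + 1) \/ (y + 1 = x + N %/ 2)]).
Proof.
move=> hN tf eG; case: (edge_cnt tf eG) => x [y [[hxy hy E] [h3 b1 b2]]].
subst e; rewrite (isdiamN hN hxy hy); case: (y =P x + N %/ 2) => [hd|hd] /=; split => //; try lia.
move=> _ h; exists x, y; split => //; lia.
Qed.

Lemma sum_t N (G : {set {set 'I_N}}) :
  \sum_(e in G) (cnt G e + (~~ isdiam e : nat)) = 2 * crossings G + #|[set e in G | ~~ isdiam e]|.
Proof. by rewrite big_split /= -cross_sum cardS. Qed.

Lemma nondiam_card N (G : {set {set 'I_N}}) : two_factor G ->
  #|[set e in G | isdiam e]| + #|[set e in G | ~~ isdiam e]| = N.
Proof. move=> tf; by rewrite -(card_split G (@isdiam N)) (tf_card tf). Qed.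

Lemma UB N m (G : {set {set 'I_N}}) : N = 4 * m -> two_factor G ->
  2 * crossings G + N %/ 2 <= N * (N - 3).
Proof.
move=> hN tf.
have h1 : \sum_(e in G) (cnt G e + (~~ isdiam e : nat)) <= \sum_(e in G) (N - 3).
  apply: leq_sum => e eG; by case: (U1 hN tf eG).
rewrite sum_t sum_nat_const (tf_card tf) in h1.
have := nondiam_card tf; have := diam_le G hN; lia.
Qed.

Lemma EQ N m (G : {set {set 'I_N}}) : N = 4 * m -> two_factor G ->
  2 * crossings G + N %/ 2 = N * (N - 3) ->
  (forall v, v < N %/ 2 -> nedge N v (v + N %/ 2) \in G) /\
  (forall e, e \in G -> ~~ isdiam e -> exists x y, [/\ x < y, y < N, e = nedge N x y &
        (y = x + N %/ 2 + 1) \/ (y + 1 = x + N %/ 2)]).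
Proof.
move=> hN tf heq.
have hle : forall e, e \in G -> cnt G e + (~~ isdiam e : nat) <= N - 3.
  by move=> e eG; case: (U1 hN tf eG).
have hs := sum_t G.
have hsum : \sum_(e in G) ((N - 3) - (cnt G e + (~~ isdiam e : nat))) = 
            \sum_(e in G) (N - 3) - \sum_(e in G) (cnt G e + (~~ isdiam e : nat)).
  by rewrite sumnB.
rewrite sum_nat_const (tf_card tf) hs in hsum.
have hnd := nondiam_card tf; have hdl := diam_le G hN.
have hd : #|[set e in G | isdiam e]| = N %/ 2.
  have h1 : \sum_(e in G) (cnt G e + (~~ isdiam e : nat)) <= \sum_(e in G) (N - 3) by apply: leq_sum.
  rewrite sum_t sum_nat_const (tf_card tf) in h1; lia.
split; first exact: (diam_full (F := G) hN hd).
have h0 : \sum_(e in G) ((N - 3) - (cnt G e + (~~ isdiam e : nat))) == 0 by rewrite hsum; apply/eqP; lia.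
move: h0; rewrite sum_nat_eq0 => /forallP h0 e eG nd.
have := h0 e; rewrite eG /= => /eqP h.
case: (U1 hN tf eG) => hh; apply => //; move: hh h; rewrite nd /=; lia.
Qed.

Definition pl N v := if v + N %/ 2 + 1 < N then v + N %/ 2 + 1 else v + N %/ 2 + 1 - N.
Definition mi N v := if v + N %/ 2 - 1 < N then v + N %/ 2 - 1 else v + N %/ 2 - 1 - N.

Definition Hs N q : {set {set 'I_N}} := [set e : {set 'I_N} | [exists x : 'I_N,
   [|| (x < N %/ 2) && (e == nedge N x (x + N %/ 2)),
       (x %% 2 == q) && (e == nedge N x (pl N x)) |
       (x %% 2 != q) && (e == nedge N x (mi N x))]]].

Ltac dif_go := match goal with
 | H : context [if _ then _ else _] |- _ => revert H; dif_go
 | |- context [if _ then _ else _] => case: ifP => ?; dif_go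
 | _ => intros
end.
Ltac dif := unfold pl, mi in *; dif_go.

Lemma inSet (T : finType) (A : {set T}) (P : pred T) x : (x \in [set y in A | P y]) = (x \in A) && P x.
Proof. by rewrite inE. Qed.

Lemma nedge_eq2 N a b c d : a = c -> b = d -> nedge N a b = nedge N c d.
Proof. by move=> -> ->. Qed.

Ltac solve_ne := dif; first [ exfalso; nlia | apply: nedge_eq2; nlia | rewrite nedgeC; apply: nedge_eq2; nlia ].

Lemma Hs_form N q e : e \in Hs N q -> exists x, x < N /\
  [\/ x < N %/ 2 /\ e = nedge N x (x + N %/ 2), x %% 2 = q /\ e = nedge N x (pl N x) |
      x %% 2 <> q /\ e = nedge N x (mi N x)].
Proof.
rewrite inE => /existsP [x /or3P [] /andP [h /eqP ->]]; exists x; split => //.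
- by constructor 1.
- by constructor 2; split => //; apply/eqP.
- by constructor 3; split => //; apply/eqP.
Qed.

Lemma Hs_diam N q x : x < N %/ 2 -> nedge N x (x + N %/ 2) \in Hs N q.
Proof.
move=> hx; have hxN : x < N by lia.
rewrite inE; apply/existsP; exists (Ordinal hxN); by rewrite /= hx eqxx.
Qed.

Lemma Hs_pl N q x : x < N -> x %% 2 = q -> nedge N x (pl N x) \in Hs N q.
Proof.
move=> hx hq; rewrite inE; apply/existsP; exists (Ordinal hx); by rewrite /= hq !eqxx orbT.
Qed.

Lemma Hs_mi N q x : x < N -> x %% 2 <> q -> nedge N x (mi N x) \in Hs N q.
Proof.
move=> hx hq; rewrite inE; apply/existsP; exists (Ordinal hx) => /=.
by move/eqP/negbTE: hq => ->; rewrite !eqxx !orbT.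
Qed.

Lemma Hs_len N m q e : N = 4 * m -> 0 < m -> e \in Hs N q ->
  exists k l, [/\ k < l, l < N, e = nedge N k l &
     [\/ l = k + N %/ 2, l = k + N %/ 2 + 1 | l + 1 = k + N %/ 2]].
Proof.
move=> hN hm /Hs_form [x [hx [[h ->]|[h ->]|[h ->]]]].
- exists x, (x + N %/ 2); split; [lia | lia | done | by constructor 1].
- rewrite /pl; case: ifP => c.
    exists x, (x + N %/ 2 + 1); split; [lia | lia | done | by constructor 2].
  exists (x + N %/ 2 + 1 - N), x; rewrite nedgeC; split; [lia | lia | done | constructor 3; lia].
- rewrite /mi; case: ifP => c.
    exists x, (x + N %/ 2 - 1); split; [lia | lia | done | constructor 3; lia].
  exists (x + N %/ 2 - 1 - N), x; rewrite nedgeC; split; [lia | lia | done | constructor 2; lia].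
Qed.

Lemma Hs_deg N m q (v : 'I_N) : N = 4 * m -> 0 < m -> q < 2 ->
  [set f in Hs N q | v \in f] =
  [set (if v < N %/ 2 then nedge N v (v + N %/ 2) else nedge N (v - N %/ 2) v);
       (if v %% 2 == q then nedge N v (pl N v) else nedge N v (mi N v))].
Proof.
move=> hN hm hq; have hv := ltn_ord v.
apply/setP => f; rewrite inSet in_set2; apply/idP/idP.
  case/andP => /Hs_form [x [hx [[h1 ->]|[h1 ->]|[h1 ->]]]] /in_nedge_ord [] e1;
  apply/orP; first [left; apply/eqP; solve_ne | right; apply/eqP; solve_ne].
case/orP => /eqP ->.
  case: ifP => c.
    by rewrite Hs_diam // in_nedge eqxx.
  rewrite in_nedge eqxx orbT andbT.
  rewrite (_ : nedge N (v - N %/ 2) v = nedge N (v - N %/ 2) (v - N %/ 2 + N %/ 2)).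
    apply: Hs_diam; lia.
  apply: nedge_eq2; lia.
case: ifP => c; rewrite in_nedge eqxx andbT.
  by apply: Hs_pl => //; apply/eqP.
by apply: Hs_mi => //; apply/eqP; rewrite c.
Qed.

Lemma Hs_tf N m q : N = 4 * m -> 0 < m -> q < 2 -> two_factor (Hs N q).
Proof.
move=> hN hm hq; split.
  move=> e /(Hs_len hN hm) [k [l [hkl hl -> _]]]; apply: nedge_edge; lia.
move=> v; rewrite (Hs_deg v hN hm hq) cards2.
set D := (if _ then _ else _); set O := (if _ then _ else _).
suff -> : D != O by [].
have hv := ltn_ord v.
have [w hw Ew] : exists2 w, w < N & w = (if v < N %/ 2 then v + N %/ 2 else v - N %/ 2).
  by exists (if v < N %/ 2 then v + N %/ 2 else v - N %/ 2) => //; case: ifP; lia.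
apply/negP => /eqP E.
have : (@Ordinal N w hw) \in D by rewrite /D; case: ifP => c; rewrite in_nedge /= Ew c eqxx ?orbT.
rewrite E /O => H; move: H; case: ifP => c1; rewrite in_nedge /= Ew => H; dif; case/orP: H => /eqP ?; nlia.
Qed.

Lemma badfacts N m q (i j : 'I_N) f : N = 4 * m -> 0 < m -> i < j ->
  f \in [set f in Hs N q | [&& i \notin f, j \notin f & ~~ cross [set i; j] f]] ->
  exists k l, [/\ k < l, l < N, f = nedge N k l,
     [\/ l = k + N %/ 2, l = k + N %/ 2 + 1 | l + 1 = k + N %/ 2] &
     [/\ (i : nat) <> k, (i : nat) <> l, (j : nat) <> k, (j : nat) <> l &
      ~~ (((i < k) && (k < j) && (j < l)) || ((k < i) && (i < l) && (l < j)))]].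
Proof.
move=> hN hm hij; rewrite inSet => /andP [/(Hs_len hN hm) [k [l [hkl hl E hlen]]]].
rewrite E -nedgeE (crossN hij (ltn_ord j) hkl hl).
rewrite !in_nedge => /and3P [h1 h2 h3].
exists k, l; split => //; split => //; lia.
Qed.

Lemma side4 i j k l : i < j -> k < l -> i <> k -> i <> l -> j <> k -> j <> l ->
  ~~ (((i < k) && (k < j) && (j < l)) || ((k < i) && (i < l) && (l < j))) ->
  [\/ i < k /\ l < j, l < i, j < k | k < i /\ j < l].
Proof.
move=> h1 h2 h3 h4 h5 h6 h7.
case: (ltngtP i k) => a; last lia; case: (ltngtP i l) => b; try lia;
case: (ltngtP j k) => c; try lia; case: (ltngtP j l) => d; try lia.
all: try (constructor 1; lia); try (constructor 2; lia); try (constructor 3; lia); try (constructor 4; lia).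
all: exfalso; move: h7; rewrite ?a ?b ?c ?d /=; lia.
Qed.

Lemma bad_le N m q (i j : 'I_N) : N = 4 * m -> 0 < m -> i < j -> [set i; j] \in Hs N q ->
  #|[set f in Hs N q | [&& i \notin f, j \notin f & ~~ cross [set i; j] f]]| <= ((j : nat) != i + N %/ 2).
Proof.
move=> hN hm hij eH; have eH' : nedge N i j \in Hs N q by rewrite nedgeE.
case: (Hs_len hN hm eH') => x [y [hxy hy E hlen]].
have hj := ltn_ord j.
case: (nedge_inj hij hj hxy hy E) => ex ey.
have h2 : N %/ 2 = 2 * m by lia.
rewrite h2 -ex -ey in hlen *.
case: ((j : nat) =P i + 2 * m) => hd /=.
  rewrite leqn0 cards_eq0; apply/eqP; apply/setP => f; rewrite in_set0.
  apply/negP => /(badfacts hN hm hij) [k [l [hkl hl _ hl2 [n1 n2 n3 n4 nc]]]].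
  rewrite h2 in hl2.
  have s1 := side4 hij hkl n1 n2 n3 n4 nc; clear n1 n2 n3 n4 nc.
  case: s1; case: hl2; lia.
apply/card_le1_eqP => f g /(badfacts hN hm hij) [k [l [hkl hl -> hl2 [n1 n2 n3 n4 nc]]]]
  /(badfacts hN hm hij) [k' [l' [hkl' hl' -> hl2' [n1' n2' n3' n4' nc']]]].
rewrite h2 in hl2 hl2'.
have s1 := side4 hij hkl n1 n2 n3 n4 nc; have s2 := side4 hij hkl' n1' n2' n3' n4' nc'.
clear nc nc' E eH n1 n2 n3 n4 n1' n2' n3' n4' hd.
apply: nedge_eq2; case: s1; case: s2; case: hl2; case: hl2'; case: hlen; lia.
Qed.

Lemma Hs_diam_card N m q : N = 4 * m -> 0 < m -> N %/ 2 <= #|[set e in Hs N q | isdiam e]|.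
Proof.
move=> hN hm; rewrite (diam_sum (Hs N q) hN) -{1}(card_half hN) -sum1_card; apply: leq_sum => v.
rewrite inE => hv; apply/card_gt0P; exists (nedge N v (v + N %/ 2)).
rewrite !inSet Hs_diam // in_nedge eqxx /=.
have hvN : v < N by lia.
rewrite (isdiamN hN _ (_ : v + N %/ 2 < N)) ?eqxx //; lia.
Qed.

Lemma LB N m q : N = 4 * m -> 0 < m -> q < 2 -> N * (N - 3) <= 2 * crossings (Hs N q) + N %/ 2.
Proof.
move=> hN hm hq; have tf := Hs_tf hN hm hq.
have h1 : \sum_(e in Hs N q) (N - 3) <= \sum_(e in Hs N q) (cnt (Hs N q) e + (~~ isdiam e : nat)).
  apply: leq_sum => e eH; have [He _] := tf.
  case: (edgeP (He _ eH)) => i [j [hij E]].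
  have hp := partition_cnt tf hij; rewrite -E in hp; have := hp eH.
  have hb := bad_le (q := q) hN hm hij; rewrite -E in hb; have := hb eH.
  rewrite E -nedgeE (isdiamN hN hij (ltn_ord j)) /cnt nedgeE; lia.
rewrite sum_t sum_nat_const (tf_card tf) in h1.
have := nondiam_card tf; have := Hs_diam_card q hN hm; lia.
Qed.

Lemma Hs_diam2 N q x a b : x < N %/ 2 -> (a = x /\ b = x + N %/ 2) \/ (a = x + N %/ 2 /\ b = x) ->
  nedge N a b \in Hs N q.
Proof. by move=> hx [[-> ->]|[-> ->]]; rewrite ?(nedgeC N (x + _)) Hs_diam. Qed.

Lemma Hs_pl2 N q x a b : x < N -> x %% 2 = q -> (a = x /\ b = pl N x) \/ (a = pl N x /\ b = x) ->
  nedge N a b \in Hs N q.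
Proof. by move=> hx hq [[-> ->]|[-> ->]]; rewrite ?(nedgeC N (pl N x)) Hs_pl. Qed.

Lemma Hs_mi2 N q x a b : x < N -> x %% 2 <> q -> (a = x /\ b = mi N x) \/ (a = mi N x /\ b = x) ->
  nedge N a b \in Hs N q.
Proof. by move=> hx hq [[-> ->]|[-> ->]]; rewrite ?(nedgeC N (mi N x)) Hs_mi. Qed.

Lemma h1_in N m b e : N = 4 * m -> b < m ->
  [|| e == nedge N (2 * b) (2 * b + N %/ 2), e == nedge N (2 * b + N %/ 2) (2 * b + 1),
      e == nedge N (2 * b + 1) (2 * b + N %/ 2 + 1) | e == nedge N (2 * b + N %/ 2 + 1) (2 * b)] ->
  e \in h1 N.
Proof.
move=> hN hb h; apply/bigcupP.
have hb' : b < N %/ 4 by lia.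
by exists (Ordinal hb'); rewrite // /cyc4 !inE /= -!orbA.
Qed.

Lemma modz N m b : N = 4 * m -> b < m -> (2 * b + N - 1) %% N = if b == 0 then N - 1 else 2 * b - 1.
Proof.
move=> hN hb; case: ifP => /eqP h.
  by rewrite h modn_small; lia.
by rewrite (_ : 2 * b + N - 1 = (2 * b - 1) + N) ?modnDr ?modn_small; lia.
Qed.

Lemma h2_in N m b e : N = 4 * m -> b < m ->
  [|| e == nedge N (2 * b) (2 * b + N %/ 2),
      e == nedge N (2 * b + N %/ 2) (if b == 0 then N - 1 else 2 * b - 1),
      e == nedge N (if b == 0 then N - 1 else 2 * b - 1) (2 * b + N %/ 2 - 1) |
      e == nedge N (2 * b + N %/ 2 - 1) (2 * b)] ->
  e \in h2 N.
Proof.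
move=> hN hb h; apply/bigcupP.
have hb' : b < N %/ 4 by lia.
by exists (Ordinal hb'); rewrite // /cyc4 /= (modz hN hb) !inE -!orbA.
Qed.

Ltac solve_e := apply/eqP; solve_ne.
Ltac pick4 := apply/or4P; first [constructor 1; solve_e | constructor 2; solve_e | constructor 3; solve_e | constructor 4; solve_e].

Lemma h1_Hs N m : N = 4 * m -> 0 < m -> h1 N = Hs N 0.
Proof.
move=> hN hm; apply/setP => e; apply/idP/idP.
  case/bigcupP => b _; have hb : b < m by have := ltn_ord b; lia.
  rewrite /cyc4 => H; rewrite !inE -!orbA in H; case/or4P: H => /eqP ->.
  - apply: (@Hs_diam2 N 0 (2 * b)); lia.
  - apply: (@Hs_pl2 N 0 (2 * b + N %/ 2)); [lia | lia | dif; lia].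
  - apply: (@Hs_diam2 N 0 (2 * b + 1)); lia.
  - apply: (@Hs_pl2 N 0 (2 * b)); [lia | lia | dif; lia].
case/Hs_form => x [hx H].
apply: (@h1_in N m ((if x < N %/ 2 then x else x - N %/ 2) %/ 2) e hN); first by dif; lia.
case: ifP => cx; have [par|par] : x %% 2 = 0 \/ x %% 2 = 1 by lia.
all: case: H => [[h ->]|[h ->]|[h ->]]; pick4.
Qed.

Lemma h2_Hs N m : N = 4 * m -> 0 < m -> h2 N = Hs N 1.
Proof.
move=> hN hm; apply/setP => e; apply/idP/idP.
  case/bigcupP => b _; have hb : b < m by have := ltn_ord b; lia.
  rewrite /cyc4 /= (modz hN hb) => H; rewrite !inE -!orbA in H; case/or4P: H => /eqP ->.
  - apply: (@Hs_diam2 N 1 (2 * b)); lia.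
  - apply: (@Hs_mi2 N 1 (2 * b + N %/ 2)); [lia | lia | dif; lia].
  - apply: (@Hs_diam2 N 1 (if (b : nat) == 0 then N %/ 2 - 1 else 2 * b - 1)); dif; lia.
  - apply: (@Hs_mi2 N 1 (2 * b)); [lia | lia | dif; lia].
case/Hs_form => x [hx H].
pose y := if x < N %/ 2 then x else x - N %/ 2.
apply: (@h2_in N m (if (y + 1) %/ 2 < m then (y + 1) %/ 2 else 0) e hN); first by rewrite /y; dif; lia.
rewrite /y; have [par|par] : x %% 2 = 0 \/ x %% 2 = 1 by lia.
all: case: H => [[h ->]|[h ->]|[h ->]]; dif; pick4.
Qed.

Lemma nedge_neq N v a b : b < N -> b <> v -> b <> a -> nedge N v a != nedge N v b.
Proof.
move=> hb h1 h2; apply/eqP => E.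
have : Ordinal hb \in nedge N v b by rewrite in_nedge eqxx orbT.
rewrite -E in_nedge /=; lia.
Qed.


Lemma eq_case N m (F : {set {set 'I_N}}) : N = 4 * m -> 0 < m -> two_factor F ->
  2 * crossings F + N %/ 2 = N * (N - 3) -> F = Hs N 0 \/ F = Hs N 1.
Proof.
move=> hN hm tf heq.
case: (EQ hN tf heq) => hdiam hnd.
have [He Hd] := tf.
have hD : forall v, v < N -> nedge N v (if v < N %/ 2 then v + N %/ 2 else v - N %/ 2) \in F.
  move=> v hv; case: ifP => c; first exact: hdiam.
  rewrite nedgeC (_ : nedge N (v - N %/ 2) v = nedge N (v - N %/ 2) (v - N %/ 2 + N %/ 2)).
    apply: hdiam; lia.
  apply: nedge_eq2; lia.
have a1 : forall v, v < N -> nedge N v (pl N v) \in F \/ nedge N v (mi N v) \in F.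
  move=> v hv.
  set D := nedge N v (if v < N %/ 2 then v + N %/ 2 else v - N %/ 2).
  have [f fS fD] : exists2 f, f \in [set f in F | Ordinal hv \in f] & f != D.
    case: (boolP [exists f in [set f in F | Ordinal hv \in f], f != D]) => [/exists_inP //|/exists_inPn hall].
    have : #|[set f in F | Ordinal hv \in f]| <= 1.
      rewrite -(cards1 D); apply: subset_leq_card; apply/subsetP => f fS.
      by have := hall f fS; rewrite negbK inE.
    by rewrite Hd.
  move: fS; rewrite inSet => /andP [fF vf].
  case: (boolP (isdiam f)) => dg.
    case/existsP: dg => i /andP [hi /eqP E]; move: fD; rewrite E; move: vf; rewrite E in_nedge /= => vf.
    case/negP; apply/eqP; rewrite /D; dif; first [apply: nedge_eq2; lia | rewrite nedgeC; apply: nedge_eq2; lia].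
  case: (hnd f fF dg) => x [y [hxy hy E hl]].
  move: vf; rewrite E in_nedge /= => vf.
  have : f = nedge N v (pl N v) \/ f = nedge N v (mi N v).
    rewrite E; case/orP: vf => /eqP vx; case: hl => hl;
    first [left; solve_ne | right; solve_ne].
  by case => <-; [left|right].
have a2 : forall v, v < N -> nedge N v (pl N v) \in F -> nedge N v (mi N v) \in F -> False.
  move=> v hv hp hmi.
  set w := if v < N %/ 2 then v + N %/ 2 else v - N %/ 2.
  have hw : w < N by rewrite /w; case: ifP; lia.
  have hpl : pl N v < N by dif; lia.
  have hmv : mi N v < N by dif; lia.
  have n1 : nedge N v w != nedge N v (pl N v) by apply: nedge_neq => //; rewrite /w; dif; lia.
  have n2 : nedge N v w != nedge N v (mi N v) by apply: nedge_neq => //; rewrite /w; dif; lia.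
  have n3 : nedge N v (pl N v) != nedge N v (mi N v) by apply: nedge_neq => //; dif; lia.
  have : #|nedge N v w |: [set nedge N v (pl N v); nedge N v (mi N v)]| <= #|[set f in F | Ordinal hv \in f]|.
    apply: subset_leq_card; apply/subsetP => f; rewrite !inE => /or3P [] /eqP ->;
    rewrite ?hD ?hp ?hmi //=; by rewrite in_nedge eqxx.
  rewrite (Hd (Ordinal hv)) cardsU1 cards2 !inE negb_or n1 n2 n3 /=; done.
pose s v := nedge N v (pl N v) \in F.
have hplN : forall v, v < N -> pl N v < N by move=> v hv; dif; lia.
have S1 : forall v, v < N -> s (pl N v) = ~~ s v.
  move=> v hv; have hp := hplN v hv; have e1 : nedge N (pl N v) (mi N (pl N v)) = nedge N v (pl N v).
    rewrite nedgeC; apply: nedge_eq2 => //; dif; lia.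
  apply/idP/idP.
    move=> h; apply/negP => h2; apply: (a2 _ hp h); by rewrite e1.
  move=> h; case: (a1 _ hp) => // h2; rewrite e1 in h2; by move: h; rewrite /s h2.
have S2 : forall v, v + 2 < N -> s (v + 2) = s v.
  move=> v hv; have hv' : v < N by lia.
  rewrite (_ : v + 2 = pl N (pl N v)); first by rewrite S1 ?S1 ?negbK //; exact: hplN.
  dif; lia.
have S3 : forall n v, v <= n -> v < N -> s v = s (v %% 2).
  elim => [|n IH] v hvn hv; first by rewrite (_ : v = 0) //; lia.
  case: (ltnP v 2) => h2; first by rewrite modn_small.
  have e2 : v = v - 2 + 2 by lia.
  rewrite {1}e2 S2; last lia.
  rewrite (IH (v - 2)); try lia.
  by rewrite (_ : (v - 2) %% 2 = v %% 2) //; lia.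
have S4 : s 1 = ~~ s 0.
  have h0 : 0 < N by lia.
  rewrite -(S1 0 h0) (S3 N (pl N 0)) ?hplN //; last by dif; lia.
  by rewrite (_ : pl N 0 %% 2 = 1) //; dif; lia.
have hs : forall v, v < N -> s v = (v %% 2 == (if s 0 then 0 else 1)).
  move=> v hv; rewrite (S3 N v) //; last lia.
  have [e|e] : v %% 2 = 0 \/ v %% 2 = 1 by lia.
    by rewrite e; case: (s 0).
  by rewrite e S4; case: (s 0).
pose q := if s 0 then 0 else 1.
have sub : F \subset Hs N q.
  apply/subsetP => e eF; case: (boolP (isdiam e)) => dg.
    by case/existsP: dg => i /andP [hi /eqP ->]; apply: Hs_diam.
  case: (hnd e eF dg) => x [y [hxy hy E [hl|hl]]].
    have hxN : x < N by lia.
    have ey : y = pl N x by dif; lia.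
    rewrite E ey; apply: Hs_pl => //; apply/eqP; rewrite -hs //; by rewrite /s -ey -E.
  have hxN : x < N by lia.
  have ey : y = mi N x by dif; lia.
  rewrite E ey; apply: Hs_mi => //; apply/eqP; rewrite -hs //.
  apply/negP => h; apply: (a2 x hxN h); by rewrite -ey -E.
have eqF : F = Hs N q.
  apply/eqP; rewrite eqEcard sub /= (tf_card tf) (tf_card (Hs_tf hN hm _)) //.
  by rewrite /q; case: (s 0).
by rewrite eqF /q; case: (s 0); [left|right].
Qed.

Unset Implicit Arguments. Set Strict Implicit. Set Printing Implicit Defensive.
Import Order.TTheory GRing.Theory Num.Theory.

Theorem propositionB1 (N : nat) (HN4 : 4 <= N) (HNdiv : 4 %| N)
    (R : realFieldType) (r : 'I_N -> R)
    (hr0 : forall i, (0 <= r i)%R) (hr1 : forall i, (r i <= 1)%R)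
    (hr : forall i j : 'I_N, i < j -> (r i < r j)%R)
    (F : {set {set 'I_N}}) :
  (two_factor F /\ (forall G : {set {set 'I_N}}, two_factor G -> crossings G <= crossings F)) <->
  (F = h1 N \/ F = h2 N).
Proof.
case/dvdnP: HNdiv => m hN'.
have hN : N = 4 * m by lia.
have hm : 0 < m by lia.
rewrite (h1_Hs hN hm) (h2_Hs hN hm).
split.
  case=> tf hmax.
  have t0 := Hs_tf (q := 0) hN hm isT.
  have lb := LB (q := 0) hN hm isT.
  have ub := UB hN tf.
  have hle := hmax _ t0.
  apply: (eq_case hN hm tf); lia.
have key : forall q : nat, q < 2 -> two_factor (Hs N q) /\
    (forall G : {set {set 'I_N}}, two_factor G -> crossings G <= crossings (Hs N q)).
  move=> q hq; split; first exact: (Hs_tf hN hm hq).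
  move=> G tG; have := UB hN tG; have := LB hN hm hq; lia.
by case => ->; apply: key.
Qed.
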